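(* Let $\mathfrak{F}=(F;+,\cdot,<)$ be an ordered field whose theory is dp-small, and let $v:F^\times\to\Gamma$ be the archimedean valuation on $F$. Then the value group $\Gamma$ is divisible.
   Context: The archimedean valuation $v$ on an ordered field $F$ is the valuation whose valuation ring is the convex hull of the prime field, i.e. $v(a)\ge0$ iff $|a|<n$ for some $n\in\mathbb{N}$. For a complete theory $T$ in language $L$ with monster model $\mathcal{U}$ ($\mathcal{U}_y$ the $|y|$-tuples from $\mathcal{U}$): a partial type $\pi(x)$ is dp-small if there do not exist $L(\mathcal{U})$-formulas $\varphi_i(x)$ ($i<\omega$), an $L$-formula $\psi(x;y)$ and $b_j\in\mathcal{U}_y$ ($j<\omega$) such that for all $i_0,j_0<\omega$ the type $\pi(x)\cup\{\varphi_{i_0}(x),\psi(x;b_{j_0})\}\cup\{\neg\varphi_i(x): i\ne i_0\}\cup\{\neg\psi(x;b_j): j\neq j_0\}$ is consistent. $T$ is dp-small if $x=x$ is dp-small for $x$ a single variable. *)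

(* Defs.v *)
From mathcomp Require Import all_boot all_order all_algebra.
Set Implicit Arguments. Unset Strict Implicit. Unset Printing Implicit Defensive.
Import Order.TTheory GRing.Theory Num.Theory.
Local Open Scope ring_scope.

Inductive term : Type :=
  | TVar of nat
  | TZero | TOne
  | TAdd of term & term
  | TOpp of term
  | TMul of term & term.

Inductive formula : Type :=
  | FEq of term & term
  | FLt of term & term
  | FNeg of formula
  | FAnd of formula & formula
  | FEx of nat & formula.

Definition upd (K : Type) (e : nat -> K) (i : nat) (a : K) : nat -> K :=
  fun j => if j == i then a else e j.

Fixpoint eval_term (K : realFieldType) (e : nat -> K) (t : term) : K :=
  match t with
  | TVar i => e i
  | TZero => 0
  | TOne => 1
  | TAdd s u => eval_term e s + eval_term e u
  | TOpp s => - eval_term e s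
  | TMul s u => eval_term e s * eval_term e u
  end.

Fixpoint holds (K : realFieldType) (e : nat -> K) (f : formula) : Prop :=
  match f with
  | FEq s u => eval_term e s = eval_term e u
  | FLt s u => eval_term e s < eval_term e u
  | FNeg g => ~ holds e g
  | FAnd g h => holds e g /\ holds e h
  | FEx i g => exists a : K, holds (upd e i a) g
  end.

Definition elementary (K K' : realFieldType) (h : K -> K') : Prop :=
  forall (f : formula) (e : nat -> K), holds e f <-> holds (h \o e) f.

(* An L(K)-formula in the single free variable x (= variable 0) is a pair
   (f, e): an L-formula f together with an assignment e of parameters from K
   to its other variables (the value of e at 0 is ignored). *)
Definition lkformula (K : realFieldType) : Type := (formula * (nat -> K))%type.

Definition sat1 (K : realFieldType) (a : K) (p : lkformula K) : Prop :=
  holds (upd p.2 0 a) p.1.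

Definition consistent (K : realFieldType) (Sigma : lkformula K -> Prop) : Prop :=
  exists (K' : realFieldType) (h : K -> K'), elementary h /\
    exists a : K', forall p, Sigma p -> sat1 a (p.1, h \o p.2).

(* The type  {phi_{i0}(x), psi(x;b_{j0})} u {~phi_i(x) : i<>i0}
   u {~psi(x;b_j) : j<>j0}   (pi(x) is x = x, hence omitted). *)
Definition dp_pattern_type (K : realFieldType) (phi : nat -> lkformula K)
  (psi : formula) (b : nat -> (nat -> K)) (i0 j0 : nat) : lkformula K -> Prop :=
  fun p => p = phi i0 \/ p = (psi, b j0)
        \/ (exists i, i <> i0 /\ p = (FNeg (phi i).1, (phi i).2))
        \/ (exists j, j <> j0 /\ p = (FNeg psi, b j)).

(* Th(F) is dp-small: no such pattern with parameters from any elementary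
   extension of F (playing the role of the monster model). *)
Definition dp_small (F : realFieldType) : Prop :=
  ~ exists (K : realFieldType) (h : F -> K), elementary h /\
      exists (phi : nat -> lkformula K) (psi : formula) (b : nat -> (nat -> K)),
        forall i0 j0 : nat, consistent (dp_pattern_type phi psi b i0 j0).

(* Archimedean valuation: valuation ring = convex hull of the prime field. *)
Definition arch_finite (F : realFieldType) (a : F) : Prop :=
  exists n : nat, `|a| < n%:R.

(* v a = v b  (for a, b nonzero) iff a/b is a unit of the valuation ring *)
Definition arch_val_eq (F : realFieldType) (a b : F) : Prop :=
  arch_finite (a / b) /\ arch_finite (b / a).

(* Main.v *)
Require Import Defs.
From HB Require Import structures.
From mathcomp Require Import all_boot all_order all_algebra.
From mathcomp Require Import boolp classical_sets filter.
From mathcomp Require Import zify.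
Import Order.TTheory GRing.Theory Num.Theory.
Local Open Scope ring_scope.

Record ultra (U : (nat -> Prop) -> Prop) : Prop := {
  uT : U (fun _ => True);
  u0 : ~ U (fun _ => False);
  uS : forall A B : nat -> Prop, (forall k, A k -> B k) -> U A -> U B;
  uI : forall A B : nat -> Prop, U A -> U B -> U (fun k => A k /\ B k);
  uC : forall A : nat -> Prop, U A \/ U (fun k => ~ A k);
  uN : forall N, U (fun k => (N <= k)%N) }.
Arguments uT {U}. Arguments u0 {U}. Arguments uS {U}. Arguments uI {U}. Arguments uC {U}. Arguments uN {U}.


Fixpoint tpow (t : term) (m : nat) : term :=
  match m with 0 => TOne | m.+1 => TMul (tpow t m) t end.

Lemma eval_tpow (K : realFieldType) (e : nat -> K) t m :
  eval_term e (tpow t m) = eval_term e t ^+ m.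
Proof. by elim: m => [|m IH] //=; rewrite IH exprSr. Qed.

Definition phiF (M : nat) : formula :=
  FEx 1 (FEq (TVar 0) (TMul (TVar 2) (tpow (TVar 1) M))).
Definition psiF : formula := FAnd (FLt (TVar 1) (TVar 0)) (FLt (TVar 0) (TVar 2)).

Lemma holds_phi (K : realFieldType) (e : nat -> K) M :
  holds e (phiF M) <-> exists y, e 0 = e 2 * y ^+ M.
Proof. by rewrite /= /upd /=; split => -[y h]; exists y; rewrite eval_tpow in h *. Qed.

Lemma holds_psi (K : realFieldType) (e : nat -> K) :
  holds e psiF <-> e 1 < e 0 /\ e 0 < e 2.
Proof. by []. Qed.

Lemma split_eq (K : realFieldType) (X Y : K) n a d :
  X ^+ (n ^ (a + d)) * Y ^+ (n ^ (a + d).+1) = (X ^+ (n ^ d) * Y ^+ (n ^ d.+1)) ^+ (n ^ a).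
Proof.
rewrite exprMn -!exprM; congr (_ ^+ _ * _ ^+ _); first by rewrite expnD mulnC.
by rewrite -addnS expnD mulnC.
Qed.

Section Kill.
Variable K : realFieldType.
Variables (c : K) (n : nat).
Hypothesis n0 : (0 < n)%N.
Hypothesis c1 : 1 < c.
Hypothesis cnot : forall z : K, c != z ^+ n /\ c != - z ^+ n.

Lemma killL (u v : K) d N : u != 0 -> (0 < d)%N -> (0 < N)%N ->
  (c * u ^+ n) ^+ N = (c ^+ (n ^ d) * v ^+ (n ^ d.+1)) ^+ N -> False.
Proof.
move=> u0 d0 N0 e.
case: d d0 e => // d _ e.
set W := c ^+ (n ^ d) * v ^+ (n ^ d.+1).
have eW : W ^+ n = c ^+ (n ^ d.+1) * v ^+ (n ^ d.+2).
  by rewrite /W exprMn -!exprM -!expnSr.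
rewrite -eW in e.
have : `|c * u ^+ n| == `|W ^+ n|.
  by rewrite -(eqrXn2 N0) ?normr_ge0 // -!normrX e.
rewrite eqr_norm2 => /orP [] /eqP h.
- have : c = (W / u) ^+ n.
    by rewrite exprMn exprVn -h mulrK // unitfE expf_neq0.
  by move=> h2; have := (cnot (W / u)).1; rewrite h2 eqxx.
- have : c = - (W / u) ^+ n.
    by rewrite exprMn exprVn -mulNr -h mulrK // unitfE expf_neq0.
  by move=> h2; have := (cnot (W / u)).2; rewrite h2 eqxx.
Qed.

Lemma kill i i0 w (y : K) : i != i0 ->
  c ^+ (n ^ i0) * (c ^+ w) ^+ (n ^ i0.+1) = c ^+ (n ^ i) * y ^+ (n ^ i.+1) -> False.
Proof.
have c0 : c != 0 by rewrite gt_eqF // (lt_trans ltr01 c1).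
have Np m : (0 < n ^ m)%N by rewrite expn_gt0 n0.
have simp : forall X Y : K, X ^+ (n ^ 0) * Y ^+ (n ^ 1) = X * Y ^+ n.
  by move=> X Y; rewrite expn0 expr1 expn1.
rewrite neq_ltn => /orP [] lt e.
- have y0 : y != 0.
    apply/eqP => y0; move: e; rewrite y0 expr0n (gtn_eqF (Np _)) mulr0.
    by apply/eqP; rewrite mulf_neq0 // expf_neq0 // expf_neq0.
  have h1 := split_eq K c (c ^+ w) n i (i0 - i); rewrite (subnKC (ltnW lt)) in h1.
  have h2 := split_eq K c y n i 0; rewrite addn0 simp in h2.
  have e' := etrans (esym h1) (etrans e h2).
  by apply: (killL y (c ^+ w) (i0 - i) (n ^ i) y0 _ (Np i) (esym e')); rewrite subn_gt0.
- have cw0 : c ^+ w != 0 by rewrite expf_neq0.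
  have h1 := split_eq K c y n i0 (i - i0); rewrite (subnKC (ltnW lt)) in h1.
  have h2 := split_eq K c (c ^+ w) n i0 0; rewrite addn0 simp in h2.
  have e' := etrans (esym h2) (etrans e h1).
  by apply: (killL (c ^+ w) y (i - i0) (n ^ i0) cw0 _ (Np i0) e'); rewrite subn_gt0.
Qed.
End Kill.

Lemma ultra_exists : exists U, ultra U.
Proof.
have [G [GU sub]] := ultraFilterLemma (@eventually_filter).
exists G; split.
- exact: (@filterT _ _ (@ultra_proper _ _ GU)).
- move=> H; have := @filter_not_empty _ _ (@ultra_proper _ _ GU).
  by apply; rewrite (_ : set0 = fun _ => False).
- move=> A B AB GA; apply: (@filterS _ _ (@ultra_proper _ _ GU) A) => //.
- move=> A B GA GB; exact: (@filterI _ _ (@ultra_proper _ _ GU)).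
- move=> A; exact: (in_ultra_setVsetC A GU).
- move=> N; apply: sub; exists N => //.
Qed.

Section UP.
Variable F : realFieldType.
Variable U : (nat -> Prop) -> Prop.
Hypothesis hU : ultra U.

Lemma uS' {A B : nat -> Prop} : (forall k, A k -> B k) -> U A -> U B.
Proof. exact: uS hU A B. Qed.
Lemma uI2 {A B : nat -> Prop} : U A -> U B -> U (fun k => A k /\ B k).
Proof. exact: uI hU A B. Qed.
Lemma uC' (A : nat -> Prop) : U A \/ U (fun k => ~ A k).
Proof. exact: uC hU A. Qed.

Lemma uA (P : nat -> Prop) : (forall k, P k) -> U P.
Proof. by move=> h; apply: (uS' _ (uT hU)). Qed.

Lemma uI' {A B C : nat -> Prop} : U A -> U B -> (forall k, A k -> B k -> C k) -> U C.
Proof. by move=> ha hb h; apply: (uS' _ (uI2 ha hb)) => k [] /h. Qed.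

Lemma uNot (A : nat -> Prop) : U A -> ~ U (fun k => ~ A k).
Proof. by move=> ha hb; apply: (u0 hU); apply: (uI' ha hb) => k ? []. Qed.

Definition eqv (f g : nat -> F) := U (fun k => f k = g k).

Lemma eqv_refl f : eqv f f. Proof. exact: uA. Qed.
Lemma eqv_sym {f g} : eqv f g -> eqv g f.
Proof. by apply: uS' => k ->. Qed.
Lemma eqv_trans {f g h} : eqv f g -> eqv g h -> eqv f h.
Proof. by move=> a b; apply: (uI' a b) => k -> ->. Qed.

Definition cls (f : nat -> F) : (nat -> F) -> Prop := fun g => eqv f g.

Record ustar := US { uset : (nat -> F) -> Prop; uprop : exists f, uset = cls f }.

Definition pi f := @US (cls f) (ex_intro (fun g => cls f = cls g) f erefl).
Definition rep (X : ustar) : nat -> F := proj1_sig (cid (uprop X)).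

Lemma ustar_ext (X Y : ustar) : uset X = uset Y -> X = Y.
Proof.
case: X Y => [s p] [t q] /= e; subst t; congr US; exact: Prop_irrelevance.
Qed.

Lemma pi_eq f g : pi f = pi g <-> eqv f g.
Proof.
split.
- move=> e; have : uset (pi f) g by rewrite e; exact: eqv_refl.
  by [].
- move=> e; apply: ustar_ext => /=; apply: funext => h; apply: propext.
  split => [a|a]; [exact: eqv_trans (eqv_sym e) a|exact: eqv_trans e a].
Qed.

Lemma repK X : pi (rep X) = X.
Proof.
rewrite /rep; case: (cid _) => f /= e; apply: ustar_ext => /=; by rewrite e.
Qed.

Lemma piP X : exists f, X = pi f.
Proof. by exists (rep X); rewrite repK. Qed.

Lemma rep_pi f : eqv (rep (pi f)) f.
Proof. by apply/pi_eq; rewrite repK. Qed.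

HB.instance Definition _ := gen_eqMixin ustar.
HB.instance Definition _ := gen_choiceMixin ustar.

Definition lift1 (o : F -> F) (X : ustar) := pi (fun k => o (rep X k)).
Definition lift2 (o : F -> F -> F) (X Y : ustar) := pi (fun k => o (rep X k) (rep Y k)).

Lemma lift1E o f : lift1 o (pi f) = pi (fun k => o (f k)).
Proof. by apply/pi_eq; apply: uS' (rep_pi f) => k ->. Qed.
Lemma lift2E o f g : lift2 o (pi f) (pi g) = pi (fun k => o (f k) (g k)).
Proof. by apply/pi_eq; apply: uI' (rep_pi f) (rep_pi g) _ => k -> ->. Qed.

Definition uzero := pi (fun _ => 0).
Definition uone := pi (fun _ => 1).
Definition uadd := lift2 +%R.
Definition uopp := lift1 -%R.
Definition umul := lift2 *%R.
Definition uinv := lift1 GRing.inv.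

Ltac pis := repeat match goal with X : ustar |- _ =>
   let f := fresh "f" in have [f ->] := piP X; clear X end.

Lemma uaddA : associative uadd.
Proof. by move=> x y z; pis; rewrite /uadd !lift2E; congr pi; apply: funext => k; rewrite addrA. Qed.
Lemma uaddC : commutative uadd.
Proof. by move=> x y; pis; rewrite /uadd !lift2E; congr pi; apply: funext => k; rewrite addrC. Qed.
Lemma uadd0 : left_id uzero uadd.
Proof. by move=> x; pis; rewrite /uadd !lift2E; congr pi; apply: funext => k; rewrite add0r. Qed.
Lemma uaddN : left_inverse uzero uopp uadd.
Proof. by move=> x; pis; rewrite /uadd /uopp lift1E !lift2E; congr pi; apply: funext => k; rewrite addNr. Qed.

HB.instance Definition _ := GRing.isZmodule.Build ustar uaddA uaddC uadd0 uaddN.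
Lemma piD f g : pi f + pi g = pi (fun k => f k + g k). Proof. exact: lift2E. Qed.
Lemma piN f : - pi f = pi (fun k => - f k). Proof. exact: lift1E. Qed.

Lemma umulA : associative umul.
Proof. by move=> x y z; pis; rewrite /umul !lift2E; congr pi; apply: funext => k; rewrite mulrA. Qed.
Lemma umulC : commutative umul.
Proof. by move=> x y; pis; rewrite /umul !lift2E; congr pi; apply: funext => k; rewrite mulrC. Qed.
Lemma umul1 : left_id uone umul.
Proof. by move=> x; pis; rewrite /umul !lift2E; congr pi; apply: funext => k; rewrite mul1r. Qed.
Lemma umulD : forall x y z : ustar, umul (x + y) z = umul x z + umul y z.
Proof. move=> x y z; pis; rewrite (piD f1 f0) /umul !lift2E piD; congr pi; apply: funext => k; by rewrite mulrDl. Qed.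
Lemma uone0 : uone != 0 :> ustar.
Proof.
apply/eqP => /pi_eq e; apply: (u0 hU); apply: uS' e => k /eqP; by rewrite oner_eq0.
Qed.

HB.instance Definition _ := GRing.Zmodule_isComNzRing.Build ustar umulA umulC umul1 umulD uone0.

Lemma pi0 : pi (fun _ => 0) = 0 :> ustar. Proof. by []. Qed.
Lemma pi1 : pi (fun _ => 1) = 1 :> ustar. Proof. by []. Qed.
Lemma piM f g : pi f * pi g = pi (fun k => f k * g k). Proof. exact: lift2E. Qed.

Lemma pi_neq0 f : pi f != 0 -> U (fun k => f k != 0).
Proof.
move=> h; case: (uC' (fun k => f k != 0)) => // hn; case/eqP: h.
by apply/pi_eq; apply: uS' hn => k /negP; rewrite negbK => /eqP.
Qed.

Lemma umulV : forall x : ustar, x != 0 -> uinv x * x = 1.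
Proof.
move=> x; pis => /pi_neq0 h; rewrite /uinv lift1E piM; apply/pi_eq.
by apply: uS' h => k h; rewrite mulVf.
Qed.
Lemma uinv0 : uinv 0 = 0.
Proof. by rewrite /uinv -pi0 lift1E invr0. Qed.

HB.instance Definition _ := GRing.ComNzRing_isField.Build ustar umulV uinv0.

Definition ule (X Y : ustar) : bool := `[< U (fun k => rep X k <= rep Y k) >].
Definition ult (X Y : ustar) : bool := `[< U (fun k => rep X k < rep Y k) >].
Definition unorm := lift1 Num.norm.

Lemma uleE f g : ule (pi f) (pi g) = `[< U (fun k => f k <= g k) >].
Proof.
rewrite /ule; apply/asboolP/asboolP => h.
  by apply: uI' (uI' (rep_pi f) (rep_pi g) (fun k a b => conj a b)) h _ => k [-> ->].
by apply: uI' (uI' (rep_pi f) (rep_pi g) (fun k a b => conj a b)) h _ => k [-> ->].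
Qed.
Lemma ultE f g : ult (pi f) (pi g) = `[< U (fun k => f k < g k) >].
Proof.
rewrite /ult; apply/asboolP/asboolP => h.
  by apply: uI' (uI' (rep_pi f) (rep_pi g) (fun k a b => conj a b)) h _ => k [-> ->].
by apply: uI' (uI' (rep_pi f) (rep_pi g) (fun k a b => conj a b)) h _ => k [-> ->].
Qed.

Lemma ule0_add : forall x y : ustar, ule 0 x -> ule 0 y -> ule 0 (x + y).
Proof.
move=> x y; pis; rewrite piD -pi0 !uleE => /asboolP a /asboolP b; apply/asboolP.
by apply: uI' a b _ => k; apply: addr_ge0.
Qed.
Lemma ule0_mul : forall x y : ustar, ule 0 x -> ule 0 y -> ule 0 (x * y).
Proof.
move=> x y; pis; rewrite piM -pi0 !uleE => /asboolP a /asboolP b; apply/asboolP.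
by apply: uI' a b _ => k; apply: mulr_ge0.
Qed.
Lemma ule0_anti : forall x : ustar, ule 0 x -> ule x 0 -> x = 0.
Proof.
move=> x; pis; rewrite -pi0 !uleE => /asboolP a /asboolP b; apply/pi_eq.
by apply: uI' a b _ => k p q; apply/eqP; rewrite eq_le p q.
Qed.
Lemma usub_ge0 : forall x y : ustar, ule 0 (y - x) = ule x y.
Proof.
move=> x y; pis; rewrite piN piD -pi0 !uleE; apply/asboolP/asboolP; apply: uS' => k;
by rewrite subr_ge0.
Qed.
Lemma ule0_total : forall x : ustar, ule 0 x || ule x 0.
Proof.
move=> x; pis; rewrite -pi0 !uleE.
case: (uC' (fun k => 0 <= f k)) => h; first by apply/orP; left; apply/asboolP.
apply/orP; right; apply/asboolP; apply: uS' h => k /negP h.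
by have := le_total 0 (f k); rewrite (negbTE h).
Qed.
Lemma unormN : forall x : ustar, unorm (- x) = unorm x.
Proof. by move=> x; pis; rewrite /unorm piN !lift1E; congr pi; apply: funext => k; rewrite normrN. Qed.
Lemma uge0_norm : forall x : ustar, ule 0 x -> unorm x = x.
Proof.
move=> x; pis; rewrite /unorm lift1E -pi0 uleE => /asboolP h; apply/pi_eq.
by apply: uS' h => k /ger0_norm.
Qed.
Lemma ult_def : forall x y : ustar, ult x y = (y != x) && ule x y.
Proof.
move=> x y; pis; rewrite ultE uleE; apply/asboolP/andP.
  move=> h; split; last by apply/asboolP; apply: uS' h => k /ltW.
  apply/eqP => /pi_eq e; apply: (u0 hU); apply: uI' e h _ => k ->; by rewrite ltxx.
case=> /eqP ne /asboolP h; case: (uC' (fun k => f0 k < f k)) => // hn.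
case: ne; apply/pi_eq; apply: uI' h hn _ => k a b; apply/eqP.
by rewrite eq_le a andbT leNgt; apply/negP.
Qed.

HB.instance Definition _ := Num.IntegralDomain_isLeReal.Build ustar
  ule0_add ule0_mul ule0_anti usub_ge0 ule0_total unormN uge0_norm ult_def.

Definition ustarR : realFieldType := ustar.

Lemma piLt f g : ((pi f : ustarR) < pi g) <-> U (fun k => f k < g k).
Proof. by rewrite -[(_ < _)]/(ult (pi f) (pi g)) ultE; split => /asboolP. Qed.

Lemma piX f m : (pi f : ustarR) ^+ m = pi (fun k => f k ^+ m).
Proof.
elim: m => [|m IH]; first by rewrite expr0 -pi1; congr pi; apply: funext => k; rewrite expr0.
by rewrite exprS IH piM; congr pi; apply: funext => k; rewrite exprS.
Qed.

Lemma los_term (t : term) {E : nat -> ustarR} {r : nat -> nat -> F} :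
  (forall i, pi (r i) = E i) ->
  eval_term E t = pi (fun k => eval_term (fun i => r i k) t).
Proof.
move=> hr; elim: t => [i||| s IHs u IHu | s IHs | s IHs u IHu] /=.
- by rewrite -hr.
- by [].
- by [].
- by rewrite IHs IHu piD.
- by rewrite IHs piN.
- by rewrite IHs IHu piM.
Qed.

Lemma uex (A : nat -> Prop) : U A -> exists k, A k.
Proof.
move=> h; case: (lem (exists k, A k)) => // hn; exfalso; apply: (u0 hU).
by apply: uS' h => k ak; apply: hn; exists k.
Qed.

Lemma los (f : formula) : forall (E : nat -> ustarR) (r : nat -> nat -> F),
  (forall i, pi (r i) = E i) ->
  (holds E f <-> U (fun k => holds (fun i => r i k) f)).
Proof.
elim: f => [s u | s u | g IH | g IHg g2 IHh | j g IH] E r hr /=.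
- rewrite (los_term s hr) (los_term u hr); exact: pi_eq.
- rewrite (los_term s hr) (los_term u hr); exact: piLt.
- rewrite (IH E r hr); split.
    by move=> hn; case: (uC' (fun k => holds (fun i => r i k) g)).
  by move=> h1 h2; exact: uNot h2 h1.
- rewrite (IHg E r hr) (IHh E r hr); split.
    by case; apply: uI2.
  by move=> h; split; apply: uS' h => k [].
- split.
  + case=> A hA.
    pose r' := fun i => if i == j then rep A else r i.
    have hr' : forall i, pi (r' i) = upd E j A i.
      by move=> i; rewrite /r' /upd; case: (i == j); [exact: repK|exact: hr].
    have := (proj1 (IH _ _ hr') hA); apply: uS' => k hk; exists (rep A k).
    congr (holds _ g): hk; apply: funext => i; rewrite /r' /upd; by case: (i == j).
  + move=> h.
    have hc : forall k, exists a, (exists b, holds (upd (fun i => r i k) j b) g) ->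
                                      holds (upd (fun i => r i k) j a) g.
      move=> k; case: (lem (exists b, holds (upd (fun i => r i k) j b) g)) => [[b hb]|hn].
        by exists b.
      by exists 0 => hb; exfalso; apply: hn.
    have [w hw] := choice hc.
    exists (pi w).
    pose r' := fun i => if i == j then w else r i.
    have hr' : forall i, pi (r' i) = upd E j (pi w) i.
      by move=> i; rewrite /r' /upd; case: (i == j); [|exact: hr].
    apply/(IH _ _ hr'); apply: uS' h => k hk.
    have := hw k hk; congr (holds _ g); apply: funext => i; rewrite /r' /upd; by case: (i == j).
Qed.

Definition diag (c : F) : ustarR := pi (fun _ => c).

Lemma diag_elem : elementary diag.
Proof.
move=> f e; rewrite (los f (diag \o e) (fun i _ => e i)) //; split.
  by move=> h; apply: uA.
move=> h; case: (lem (holds e f)) => // hn; exfalso; apply: (u0 hU).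
by apply: uS' h.
Qed.



Lemma pattern (c : F) (n : nat) : (0 < n)%N -> 1 < c ->
  (forall z : F, c != z ^+ n /\ c != - z ^+ n) ->
  exists (phi : nat -> lkformula ustarR) (psi : formula) (b : nat -> (nat -> ustarR)),
    forall i0 j0 : nat, consistent (dp_pattern_type phi psi b i0 j0).
Proof.
move=> n0 c1 cnot.
pose lo j : ustarR := pi (fun k => c ^+ (2 * j * k)).
pose hi j : ustarR := pi (fun k => c ^+ ((2 * j).+1 * k)).
exists (fun i => (phiF (n ^ i.+1), fun _ => diag (c ^+ (n ^ i)))), psiF,
  (fun j v => if v == 1%N then lo j else hi j).
move=> i0 j0.
pose L := (n ^ i0.+1)%N.
pose wk k := ((2 * j0 * k) %/ L + 1)%N.
pose xf k := c ^+ (n ^ i0) * (c ^+ wk k) ^+ L.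
have xfE k : xf k = c ^+ (n ^ i0 + wk k * L) by rewrite /xf -exprM exprD.
have Lpos : (0 < L)%N by rewrite expn_gt0 n0.
have inI : U (fun k => c ^+ (2 * j0 * k) < xf k /\ xf k < c ^+ ((2 * j0).+1 * k)).
  apply: uS' (uN hU (n ^ i0 + L).+1) => k hk.
  rewrite xfE !ltr_eXn2l //.
  have := divn_eq (2 * j0 * k) L; have := ltn_pmod (2 * j0 * k) Lpos.
  rewrite /wk; set q := (_ %/ L)%N; set r := (_ %% L)%N => hr hq.
  rewrite mulnDl mul1n mulSn.
  split; lia.
exists ustarR, id; split; first by [].
exists (pi xf) => p [->|[->|[[i [ne ->]]|[j [ne ->]]]]].
- rewrite /sat1 /=; apply/holds_phi; rewrite /upd /=.
  by exists (pi (fun k => c ^+ wk k)); rewrite piX /diag piM.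
- rewrite /sat1 /=; apply/holds_psi; rewrite /upd /=.
  by split; apply/piLt; apply: uS' inI => k [].
- rewrite /sat1 /= => /holds_phi [Y]; rewrite /upd /=.
  have [g ->] := piP Y; rewrite piX /diag piM => /pi_eq h.
  have [k hk] := uex _ h.
  have ne' : i != i0 by apply/eqP.
  exact: (@kill _ c n n0 c1 cnot i i0 (wk k) (g k) ne' hk).
- rewrite /sat1 /= => /holds_psi; rewrite /upd /= => -[/piLt h1 /piLt h2].
  have := uI2 (uI2 h1 h2) (uI2 inI (uN hU 1)).
  move/uex => [k [[a b0] [[a0 b1] k1]]].
  rewrite !xfE !ltr_eXn2l // in a b0 a0 b1.
  apply: ne; nia.
Qed.

End UP.

Lemma not_small (F : realFieldType) (c : F) (n : nat) : (0 < n)%N -> 1 < c ->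
  (forall z : F, c != z ^+ n /\ c != - z ^+ n) -> ~ dp_small F.
Proof.
move=> n0 c1 cnot hs; have [U hU] := ultra_exists; apply: hs.
exists (@ustarR F U hU), (@diag F U hU); split; first exact: diag_elem.
exact: (@pattern F U hU c n n0 c1 cnot).
Qed.

Theorem lemma3p10 (F : realFieldType) (hF : dp_small F) :
  forall (a : F) (n : nat), a != 0 -> (0 < n)%N ->
    exists b : F, b != 0 /\ arch_val_eq (b ^+ n) a.
Proof.
move=> a n a0 n0.
case: (lem (exists b : F, b != 0 /\ arch_val_eq (b ^+ n) a)) => // hno; exfalso.
have fin1 : forall x : F, x = 1 \/ x = -1 -> arch_finite x.
  by move=> x [] ->; exists 2%N; rewrite ?normrN normr1 ltr1n.
have pm : forall z : F, a != z ^+ n /\ a != - z ^+ n.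
  move=> z; have z0 : a = z ^+ n \/ a = - z ^+ n -> z != 0.
    move=> h; apply/eqP => hz; move: a0.
    by case: h => ->; rewrite hz expr0n gtn_eqF // ?oppr0 eqxx.
  split; apply/eqP => e; apply: hno; exists z.
  - split; first by apply: z0; left.
    have zn : z ^+ n != 0 by rewrite expf_neq0 // z0 //; left.
    by rewrite /arch_val_eq e divff //; split; apply: fin1; left.
  - split; first by apply: z0; right.
    rewrite /arch_val_eq e; have zn : z ^+ n != 0 by rewrite expf_neq0 // z0 //; right.
    split; apply: fin1; right; first by rewrite invrN mulrN divff.
    by rewrite mulNr divff.
set s := `|a|.
have ha : a = s \/ a = - s.
  by case: (leP 0 a) => h; [left; rewrite /s ger0_norm | right; rewrite /s ltr0_norm // opprK].
have pms : forall z : F, s != z ^+ n /\ s != - z ^+ n.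
  move=> z; have [h1 h2] := pm z; case: ha => ea; rewrite ea in h1 h2 => //.
  split; apply/eqP => e.
    by move/eqP: h2; rewrite e.
  by move/eqP: h1; rewrite e opprK.
have s0 : 0 < s by rewrite /s normr_gt0.
case: (ltrgtP s 1) => hs.
- apply: (@not_small F (s^-1) n n0 _ _ hF); first by rewrite invf_gt1.
  move=> z; have [h1 h2] := pms (z^-1); split; apply/eqP => e.
    by move/eqP: h1; rewrite exprVn -e invrK.
  by move/eqP: h2; rewrite exprVn -invrN -e invrK.
- exact: (@not_small F s n n0 hs pms hF).
- by have [h1 _] := pms 1; move/eqP: h1; rewrite expr1n hs.
Qed.
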